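(* $\mathrm{uniform}\text{-}\mathrm{FAC}^0\text{-}\textsc{Or} \neq \mathrm{uniform}\text{-}\mathrm{FAC}^0\text{-}\textsc{And}$, i.e. the class of languages decided by $\mathrm{FAC}^0$-uniform families of $\textsc{Or}$ circuits differs from the class of languages decided by $\mathrm{FAC}^0$-uniform families of $\textsc{And}$ circuits.
   Context: A Boolean circuit on $n$ variables $w_0,\dots,w_{n-1}$ is a directed acyclic multigraph whose source gates are labelled by an input variable or by a constant $0$ or $1$, whose other gates are labelled by Boolean functions, and in which one gate is designated the output gate (there may be other sinks). An $\textsc{Or}$ circuit is a circuit whose only gates are input gates, constant gates and (unbounded fan-in) $\textsc{Or}$ gates, one $\textsc{Or}$ gate being the output gate; an $\textsc{And}$ circuit is defined analogously with $\textsc{And}$ gates. $\mathrm{FAC}^0$ is the class of functions $\{0,1\}^*\to\{0,1\}^*$ computable by $\mathrm{DLOGTIME}$-uniform families of constant-depth, polynomial-size circuits with unbounded fan-in $\textsc{And}$/$\textsc{Or}$ gates and fan-in-1 $\textsc{Not}$ gates. A circuit family $(C_n)_{n\in\mathbb N}$ ($C_n$ having $n$ input gates) decides $L\subseteq\{0,1\}^*$ if for every $w\in\{0,1\}^n$, $C_n(w)=1$ iff $w\in L$; it is $\mathrm{FAC}^0$-uniform if the map $1^n\mapsto C_n$ (binary encoding of $C_n$) is in $\mathrm{FAC}^0$. $\mathrm{uniform}\text{-}\mathrm{FAC}^0\text{-}\textsc{Or}$ (resp. $\textsc{And}$) is the set of languages over $\{0,1\}$ decided by $\mathrm{FAC}^0$-uniform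 families of $\textsc{Or}$ (resp. $\textsc{And}$) circuits. *)

(* Defs.v *)
From mathcomp Require Import all_boot.
Set Implicit Arguments. Unset Strict Implicit. Unset Printing Implicit Defensive.

(* number of bits of x (bitlen 0 = 1) *)
Definition bitlen (x : nat) : nat := (trunc_log 2 x).+1.

(* the W lowest bits of x, most significant bit first *)
Definition fixbits (W x : nat) : seq bool :=
  [seq odd (x %/ 2 ^ (W - i.+1)) | i <- iota 0 W].

Definition bin_val (s : seq bool) : nat := foldl (fun acc (b : bool) => acc.*2 + b) 0 s.

(* self-delimiting code: every bit doubled, terminated by 01 *)
Definition sdcode (x : nat) : seq bool :=
  flatten [seq [:: b; b] | b <- fixbits (bitlen x) x] ++ [:: false; true].

Inductive gtype := GAnd | GOr | GNot | GConst of bool | GInput of nat.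

(* A circuit: gates 0 .. csize-1, gate g has label ctype g and the list
   (with repetitions: multigraph) of its predecessors cpred g. *)
Record circuit := Circuit {
  csize : nat;
  ctype : nat -> gtype;
  cpred : nat -> seq nat }.

(* Well-formedness for a circuit on n variables w_0..w_{n-1}:
   predecessors have smaller numbers (so the graph is acyclic), source
   gates are exactly the input/constant gates, Not has fan-in 1. *)
Definition wf_gate (n : nat) (C : circuit) (g : nat) : Prop :=
  (forall p, p \in cpred C g -> p < g) /\
  match ctype C g with
  | GInput i => i < n /\ cpred C g = [::]
  | GConst _ => cpred C g = [::]
  | GNot => size (cpred C g) = 1
  | GAnd | GOr => cpred C g != [::]
  end.

Definition wf_circuit (n : nat) (C : circuit) : Prop :=
  forall g, g < csize C -> wf_gate n C g.

Fixpoint gval (C : circuit) (w : seq bool) (fuel g : nat) : bool :=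
  match fuel with
  | 0 => false
  | f.+1 =>
    match ctype C g with
    | GAnd => all (gval C w f) (cpred C g)
    | GOr => has (gval C w f) (cpred C g)
    | GNot => ~~ gval C w f (head 0 (cpred C g))
    | GConst b => b
    | GInput i => nth false w i
    end
  end.

Definition gate_val (C : circuit) (w : seq bool) (g : nat) : bool :=
  gval C w g.+1 g.

Fixpoint gdepth (C : circuit) (fuel g : nat) : nat :=
  match fuel with
  | 0 => 0
  | f.+1 => foldr maxn 0 [seq (gdepth C f p).+1 | p <- cpred C g]
  end.

Definition gate_depth (C : circuit) (g : nat) : nat := gdepth C g.+1 g.

Definition gtype_code (t : gtype) : nat :=
  match t with
  | GAnd => 0 | GOr => 1 | GNot => 2
  | GConst false => 3 | GConst true => 4
  | GInput i => 5 + i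
  end.

(* All numbers are written with the same width W (given in unary first):
   W, size, output gate, then for each gate: type code, fan-in, preds. *)
Definition enc_circuit (Co : circuit * nat) : seq bool :=
  let C := Co.1 in let out := Co.2 in
  let N := foldr maxn 0 ([:: csize C; out] ++
             [seq maxn (gtype_code (ctype C g)) (foldr maxn (size (cpred C g)) (cpred C g))
             | g <- iota 0 (csize C)]) in
  let W := bitlen N in
  let fb := fixbits W in
  nseq W true ++ [:: false] ++ fb (csize C) ++ fb out ++
  flatten [seq fb (gtype_code (ctype C g)) ++ fb (size (cpred C g)) ++
               flatten [seq fb p | p <- cpred C g]
          | g <- iota 0 (csize C)].

Inductive move := MLeft | MStay | MRight.

Definition move_head (m : move) (h : nat) : nat :=
  match m with MLeft => h.-1 | MStay => h | MRight => h.+1 end.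

(* Deterministic random-access TM: finitely many states 'I_nstates,
   work tapes 'I_ntapes.+1 over {0,1,blank} (tape ord0 is the index tape).
   At every step the machine sees the input symbol at the position whose
   binary value (MSB first) is the nonblank prefix of the index tape
   (None if that position is >= the input length), the symbols under its
   heads, and writes/moves on each work tape. *)
Record ratm := RATM {
  nstates : nat;
  ntapes : nat;
  rstart : 'I_nstates;
  racc : 'I_nstates;
  rrej : 'I_nstates;
  rdelta : 'I_nstates -> option bool -> {ffun 'I_ntapes.+1 -> option bool} ->
           'I_nstates * {ffun 'I_ntapes.+1 -> option bool} * {ffun 'I_ntapes.+1 -> move} }.

Record rconf (M : ratm) := RConf {
  cstate : 'I_(nstates M);
  ctapes : 'I_(ntapes M).+1 -> seq (option bool);
  cheads : 'I_(ntapes M).+1 -> nat }.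

Fixpoint somes_prefix (s : seq (option bool)) : seq bool :=
  match s with
  | Some b :: s' => b :: somes_prefix s'
  | _ => [::]
  end.

Definition rinit (M : ratm) : rconf M :=
  @RConf M (rstart M) (fun _ => [::]) (fun _ => 0).

Definition rhalted (M : ratm) (c : rconf M) : bool :=
  (cstate c == racc M) || (cstate c == rrej M).

Definition rstep (M : ratm) (w : seq bool) (c : rconf M) : rconf M :=
  if rhalted c then c else
  let i := bin_val (somes_prefix (ctapes c ord0)) in
  let inp := if i < size w then Some (nth false w i) else None in
  let rd := [ffun t => nth None (ctapes c t) (cheads c t)] in
  let: (q', wr, mv) := rdelta (cstate c) inp rd in
  @RConf M q' (fun t => set_nth None (ctapes c t) (cheads c t) (wr t))
              (fun t => move_head (mv t) (cheads c t)).

Definition rrun (M : ratm) (w : seq bool) (t : nat) : rconf M :=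
  iter t (@rstep M w) (rinit M).

Definition decides_within (M : ratm) (w : seq bool) (T : nat) (P : Prop) : Prop :=
  rhalted (rrun M w T) /\ (cstate (rrun M w T) = racc M <-> P).

(* A multi-output circuit: outputs come in pairs (valid gate, bit gate);
   the output string is the sequence of bit gates along the maximal
   prefix of pairs whose valid gate evaluates to 1. *)
Record mcircuit := MCircuit {
  mc : circuit;
  mouts : seq (nat * nat) }.

Definition mc_output (D : mcircuit) (w : seq bool) : seq bool :=
  let k := find (fun p : nat * nat => ~~ gate_val (mc D) w p.1) (mouts D) in
  [seq gate_val (mc D) w p.2 | p <- take k (mouts D)].

(* direct connection language of D (n = |y|):
   tag 0 : gate a has type code b;   tag 1 : gate b is a predecessor of a;
   tag 2 : the valid gate of output pair a is b;
   tag 3 : the bit gate of output pair a is b. *)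
Definition dc_holds (D : mcircuit) (tag a b : nat) : bool :=
  match tag with
  | 0 => (a < csize (mc D)) && (gtype_code (ctype (mc D) a) == b)
  | 1 => (a < csize (mc D)) && (b \in cpred (mc D) a)
  | 2 => (a < size (mouts D)) && ((nth (0, 0) (mouts D) a).1 == b)
  | 3 => (a < size (mouts D)) && ((nth (0, 0) (mouts D) a).2 == b)
  | _ => false
  end.

Definition dc_word (tag a b : nat) (y : seq bool) : seq bool :=
  sdcode tag ++ sdcode a ++ sdcode b ++ y.

Definition dlogtime_uniform (D : nat -> mcircuit) : Prop :=
  exists (M : ratm) (c : nat), forall tag a b (y : seq bool),
    let w := dc_word tag a b y in
    decides_within M w (c * (trunc_log 2 (size w)).+1)
      (dc_holds (D (size y)) tag a b).

Definition FAC0 (f : seq bool -> seq bool) : Prop :=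
  exists (D : nat -> mcircuit) (c d : nat),
    (forall n, wf_circuit n (mc (D n))) /\
    (forall n, csize (mc (D n)) <= c * n ^ c + c) /\
    (forall n, size (mouts (D n)) <= c * n ^ c + c) /\
    (forall n, all (fun p : nat * nat => (p.1 < csize (mc (D n))) && (p.2 < csize (mc (D n))))
                   (mouts (D n))) /\
    (forall n g, g < csize (mc (D n)) -> gate_depth (mc (D n)) g <= d) /\
    dlogtime_uniform D /\
    (forall w, f w = mc_output (D (size w)) w).

Definition is_or_circuit (Co : circuit * nat) : Prop :=
  (forall g, g < csize Co.1 ->
     match ctype Co.1 g with GInput _ | GConst _ | GOr => True | _ => False end) /\
  ctype Co.1 Co.2 = GOr.

Definition is_and_circuit (Co : circuit * nat) : Prop :=
  (forall g, g < csize Co.1 ->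
     match ctype Co.1 g with GInput _ | GConst _ | GAnd => True | _ => False end) /\
  ctype Co.1 Co.2 = GAnd.

Definition uniform_FAC0_class (K : circuit * nat -> Prop)
  (L : seq bool -> Prop) : Prop :=
  exists C : nat -> circuit * nat,
    (forall n, wf_circuit n (C n).1 /\ (C n).2 < csize (C n).1 /\ K (C n)) /\
    (forall w, gate_val (C (size w)).1 w (C (size w)).2 = true <-> L w) /\
    (exists f, FAC0 f /\ forall n, f (nseq n true) = enc_circuit (C n)).

Definition uniform_FAC0_Or := uniform_FAC0_class is_or_circuit.
Definition uniform_FAC0_And := uniform_FAC0_class is_and_circuit.

(* Main.v *)
Require Import Defs.
From mathcomp Require Import all_boot.
From mathcomp Require Import zify.
Set Implicit Arguments. Unset Strict Implicit. Unset Printing Implicit Defensive.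

Lemma fixbitsS W x : fixbits W.+1 x = rcons (fixbits W x./2) (odd x).
Proof.
rewrite /fixbits.
have -> : iota 0 W.+1 = iota 0 W ++ [:: W] by rewrite -addn1 iotaD.
rewrite map_cat /= cats1 subnn expn0 divn1.
congr rcons; apply/eq_in_map => i; rewrite mem_iota add0n => /andP[_ hi].
rewrite -divn2 -divnMA -expnS; congr (odd (_ %/ 2 ^ _)); lia.
Qed.

Lemma bin_val_fixbits W x : x < 2 ^ W -> bin_val (fixbits W x) = x.
Proof.
elim: W x => [|W IH] x hx.
  by move: hx; rewrite expn0 ltnS leqn0 => /eqP ->.
rewrite fixbitsS /bin_val foldl_rcons -/(bin_val _) IH.
  by rewrite -{3}(odd_double_half x) addnC.
by rewrite ltn_half_double -muln2 -expnSr.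
Qed.

Lemma bitlenP x : x < 2 ^ bitlen x.
Proof. exact: trunc_log_ltn. Qed.

Lemma size_fixbits W x : size (fixbits W x) = W.
Proof. by rewrite size_map size_iota. Qed.

Fixpoint dec_bits (s : seq bool) : option (seq bool * seq bool) :=
  match s with
  | b1 :: b2 :: r =>
    if b1 == b2 then
      match dec_bits r with Some (p, u) => Some (b1 :: p, u) | None => None end
    else if b2 && ~~ b1 then Some ([::], r) else None
  | _ => None
  end.

Lemma dec_bits_code bs u :
  dec_bits (flatten [seq [:: b; b] | b <- bs] ++ [:: false; true] ++ u) = Some (bs, u).
Proof. by elim: bs => [|b bs IH] //=; rewrite eqxx IH. Qed.

Lemma dec_bits_cat s z p u : dec_bits s = Some (p, u) -> dec_bits (s ++ z) = Some (p, u ++ z).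
Proof.
move: {2}(size s) (leqnn (size s)) => n; elim: n s p u => [|n IH] [|b1 [|b2 r]] p u //=.
move=> hs; case: eqP => _.
  case e: (dec_bits r) => [[p' u']|] // [<- <-].
  by rewrite (IH r p' u') //; move: hs => /=; lia.
by case: (b2 && ~~ b1) => // -[<- <-].
Qed.

Definition decode3 (s : seq bool) : option (nat * nat * nat * seq bool) :=
  match dec_bits s with
  | Some (t, s1) =>
    match dec_bits s1 with
    | Some (a, s2) =>
      match dec_bits s2 with
      | Some (b, s3) => Some (bin_val t, bin_val a, bin_val b, s3)
      | None => None end
    | None => None end
  | None => None end.

Lemma dec_sdcode x u : dec_bits (sdcode x ++ u) = Some (fixbits (bitlen x) x, u).
Proof. by rewrite /sdcode -catA dec_bits_code. Qed.

Lemma decode3_code t a b u :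
  decode3 (sdcode t ++ sdcode a ++ sdcode b ++ u) = Some (t, a, b, u).
Proof.
by rewrite /decode3 dec_sdcode dec_sdcode dec_sdcode !bin_val_fixbits // bitlenP.
Qed.

Lemma decode3_cat s z x u : decode3 s = Some (x, u) -> decode3 (s ++ z) = Some (x, u ++ z).
Proof.
rewrite /decode3; case e1: (dec_bits s) => [[t s1]|] //.
rewrite (dec_bits_cat z e1).
case e2: (dec_bits s1) => [[a s2]|] //; rewrite (dec_bits_cat z e2).
case e3: (dec_bits s2) => [[b s3]|] //; rewrite (dec_bits_cat z e3).
by case=> <- <-.
Qed.


Definition C2 : circuit * nat :=
  (Circuit 3 (fun g => match g with 0 => GInput 0 | 1 => GInput 1 | _ => GOr end)
     (fun g => if g == 2 then [:: 0; 1] else [::]), 2).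
Definition C0 : circuit * nat :=
  (Circuit 2 (fun g => match g with 0 => GConst false | _ => GOr end)
     (fun g => if g == 1 then [:: 0] else [::]), 1).
Definition Cb (big : bool) := if big then C2 else C0.

Definition Dc (big : bool) : mcircuit :=
  MCircuit (Circuit 2 (fun g => if g == 0 then GConst false else GConst true) (fun _ => [::]))
    [seq (1, nat_of_bool b) | b <- enc_circuit (Cb big)].

Definition decide (hs : seq (option bool)) : bool :=
  match decode3 (somes_prefix hs) with
  | Some (t, a, b, r) => dc_holds (Dc (1 < size r)) t a b
  | None => false
  end.

Notation KK := 26.
Definition view (w : seq bool) (i : nat) := if i < size w then Some (nth false w i) else None.

Lemma somes_view w m k : somes_prefix [seq view w i | i <- iota m k] = take k (drop m w).
Proof.
elim: k m => [|k IH] m /=; first by rewrite take0.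
rewrite /view; case: ltnP => h.
  by rewrite IH (drop_nth false h).
by rewrite drop_oversize.
Qed.

Lemma size_encb bg : size (enc_circuit (Cb bg)) <= 34.
Proof. by case: bg; vm_compute. Qed.

Lemma dc_bounds bg t a b : dc_holds (Dc bg) t a b ->
  ((t < 4) && (a < 34) && (b < 2)) || ((t == 0) && (a < 2) && (b < 5)).
Proof.
rewrite /dc_holds /Dc; move: (size_encb bg); move: (enc_circuit (Cb bg)) => E hE.
case: t => [|[|[|[|t]]]] //=.
- case/andP => ha /eqP <-; apply/orP; right; rewrite ha.
  by case: ifP.
- by case/andP => ha; rewrite in_nil.
- by case/andP => ha /eqP <-; rewrite size_map in ha; rewrite (leq_trans ha) //
     (nth_map false).
- case/andP => ha /eqP <-; rewrite size_map in ha; rewrite (leq_trans ha) //.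
  by rewrite (nth_map false) //=; case: (nth _ _ _).
Qed.

Definition code3 t a b := sdcode t ++ sdcode a ++ sdcode b.

Lemma code3_small1 : all (fun t => all (fun a => all (fun b => size (code3 t a b) <= 24)
  (iota 0 2)) (iota 0 34)) (iota 0 4).
Proof. by vm_compute. Qed.
Lemma code3_small2 : all (fun a => all (fun b => size (code3 0 a b) <= 24)
  (iota 0 5)) (iota 0 2).
Proof. by vm_compute. Qed.

Lemma decode3_code3 t a b u : decode3 (code3 t a b ++ u) = Some (t, a, b, u).
Proof. by rewrite /code3 -(catA (sdcode t)) -(catA (sdcode a)) decode3_code. Qed.

Lemma dc_small bg t a b : dc_holds (Dc bg) t a b -> size (code3 t a b) <= 24.
Proof.
case/dc_bounds/orP => [/andP[/andP[ht ha] hb]|/andP[/andP[/eqP -> ha] hb]].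
  move/allP: code3_small1 => /(_ t); rewrite mem_iota ht => /(_ isT) /allP /(_ a).
  by rewrite mem_iota ha => /(_ isT) /allP /(_ b); rewrite mem_iota hb => /(_ isT).
move/allP: code3_small2 => /(_ a); rewrite mem_iota ha => /(_ isT) /allP /(_ b).
by rewrite mem_iota hb => /(_ isT).
Qed.

Lemma decide_ok t a b y :
  decide [seq view (dc_word t a b y) i | i <- iota 0 KK] = dc_holds (Dc (1 < size y)) t a b.
Proof.
rewrite /decide somes_view drop0.
have -> : dc_word t a b y = code3 t a b ++ y.
  by rewrite /dc_word /code3 -(catA (sdcode t)) -(catA (sdcode a)).
have key : size (code3 t a b) <= 24 ->
    decode3 (take KK (code3 t a b ++ y)) = Some (t, a, b, take (KK - size (code3 t a b)) y).
  move=> hs.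
  have -> : take KK (code3 t a b ++ y) = code3 t a b ++ take (KK - size (code3 t a b)) y.
    by rewrite take_cat ltnNge (leq_trans hs).
  exact: decode3_code3.
have hcl : size (code3 t a b) <= 24 ->
    (1 < size (take (KK - size (code3 t a b)) y)) = (1 < size y).
  move=> hs; rewrite size_take; case: (ltnP (KK - size (code3 t a b)) (size y)) => h //.
  apply/idP/idP => _; lia.
apply/idP/idP.
  case e: decode3 => [[[[t' a'] b'] r]|] //.
  have := decode3_cat (drop KK (code3 t a b ++ y)) e.
  rewrite cat_take_drop decode3_code3 => -[? ? ? _]; subst t' a' b'.
  move=> H; have hs := dc_small H; move: H; move: e; rewrite key // => -[<-].
  by rewrite hcl.
by move=> H; have hs := dc_small H; rewrite key // hcl.
Qed.

Definition T : finType := ('I_4 * 'I_KK * 'I_5 * {ffun 'I_KK -> option bool})%type.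
Definition mkS (ph p j : nat) (h : {ffun 'I_KK -> option bool}) : T :=
  (inord ph, inord p, inord j, h).
Definition h0 : {ffun 'I_KK -> option bool} := [ffun _ => None].
Definition ACC := mkS 2 0 0 h0.
Definition REJ := mkS 3 0 0 h0.
Definition bitk k j := nth false (fixbits 5 k) j.

Definition next (s : T) (inp r : option bool) : T * option bool * move :=
  let: (ph, p, j, h) := s in
  if val ph == 0 then
    if val j == 0 then
      let h' := [ffun i : 'I_KK => if val i == val p then inp else h i] in
      if val p == KK.-1 then
        ((if decide [seq h' i | i <- enum 'I_KK] then ACC else REJ), r, MStay)
      else (mkS 0 p 1 h', Some (bitk p.+1 0), MRight)
    else if val j == 4 then (mkS 1 p 4 h, Some (bitk p.+1 4), MStay)
    else (mkS 0 p j.+1 h, Some (bitk p.+1 j), MRight)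
  else if val ph == 1 then
    ((if val j == 1 then mkS 0 p.+1 0 h else mkS 1 p j.-1 h), r, MLeft)
  else (s, r, MStay).

Definition rdel (q : 'I_#|T|) (inp : option bool) (rd : {ffun 'I_1 -> option bool}) :
   'I_#|T| * {ffun 'I_1 -> option bool} * {ffun 'I_1 -> move} :=
  let: (s', wr, mv) := next (enum_val q) inp (rd ord0) in
  (enum_rank s', [ffun _ => wr], [ffun _ => mv]).

Definition M : ratm := @RATM #|T| 0 (enum_rank (mkS 0 0 0 h0)) (enum_rank ACC) (enum_rank REJ) rdel.

Section Run.
Variable w : seq bool.

Definition Repr (c : rconf M) (s : T) tp hd :=
  cstate c = enum_rank s /\ ctapes c ord0 = tp /\ cheads c ord0 = hd.

Lemma notACC (s : T) : val s.1.1.1 < 2 -> (s == ACC) = false /\ (s == REJ) = false.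
Proof.
move=> h; split; apply/eqP => E; move: h; rewrite E /= inordK //.
Qed.

Lemma step_repr c s tp hd : Repr c s tp hd -> val s.1.1.1 < 2 ->
  let: (s', wr, mv) := next s (view w (bin_val (somes_prefix tp))) (nth None tp hd) in
  Repr (rstep w c) s' (set_nth None tp hd wr) (move_head mv hd).
Proof.
case: c => q tps hds; rewrite /Repr /= => -[-> [Ht Hh]] hph.
have [h1 h2] := notACC hph.
rewrite /rstep /rhalted /= !(inj_eq enum_rank_inj) h1 h2 /=.
rewrite /rdel enum_rankK ffunE Ht Hh.
rewrite /view; case: (next s _ _) => [[s' wr] mv] /=.
by rewrite !ffunE Ht Hh.
Qed.

Definition hp p : {ffun 'I_KK -> option bool} :=
  [ffun i : 'I_KK => if val i < p then view w i else None].
Definition fbt k := map Some (fixbits 5 k).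
Definition oldt p := if p == 0 then [::] else fbt p.
Definition tapeW p j := take j (fbt p.+1) ++ drop j (oldt p).

Arguments tapeW : simpl never.
Arguments fbt : simpl never.
Arguments oldt : simpl never.

Lemma set_nth_catsz (a b : seq (option bool)) y :
  set_nth None (a ++ b) (size a) y = a ++ set_nth None b 0 y.
Proof. by elim: a => //= x a ->. Qed.

Lemma set_nth_mid (s old : seq (option bool)) j : j < size s ->
  old = [::] \/ size old = size s ->
  set_nth None (take j s ++ drop j old) j (nth None s j) = take j.+1 s ++ drop j.+1 old.
Proof.
move=> hj hold.
have hs : size (take j s) = j by rewrite size_take hj.
rewrite -[X in set_nth _ _ X]hs set_nth_catsz (take_nth None hj) -cats1 -catA.
case: hold => [->|ho] //=.
by rewrite (drop_nth None) ?ho.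
Qed.

Lemma set_nth_same (s : seq (option bool)) j : j < size s -> set_nth None s j (nth None s j) = s.
Proof. by elim: s j => [|x s IH] [|j] //= hj; rewrite IH. Qed.

Lemma somes_map s : somes_prefix (map Some s) = s.
Proof. by elim: s => //= x s ->. Qed.

Lemma read_val p : p < 32 -> bin_val (somes_prefix (oldt p)) = p.
Proof.
rewrite /oldt; case: eqP => [->|_] // hp.
by rewrite /fbt somes_map bin_val_fixbits.
Qed.

Lemma size_fbt k : size (fbt k) = 5.
Proof. by rewrite size_map size_fixbits. Qed.

Lemma oldt_size p : oldt p = [::] \/ size (oldt p) = size (fbt p.+1).
Proof. by rewrite /oldt; case: eqP => _; [left | right; rewrite !size_fbt]. Qed.

Lemma tapeW_step p j : j < 5 ->
  set_nth None (tapeW p j) j (Some (bitk p.+1 j)) = tapeW p j.+1.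
Proof.
move=> hj; rewrite /tapeW /bitk -(nth_map false None Some) ?size_fixbits //.
by rewrite -/(fbt _) set_nth_mid ?size_fbt //; apply: oldt_size.
Qed.

Lemma tapeW5 p : tapeW p 5 = fbt p.+1.
Proof.
rewrite /tapeW take_oversize ?size_fbt // drop_oversize ?cats0 //.
by case: (oldt_size p) => ->; rewrite ?size_fbt.
Qed.

Lemma hpS p :
  [ffun i : 'I_KK => if nat_of_ord i == p then view w p else hp p i] = hp p.+1.
Proof.
apply/ffunP => i; rewrite !ffunE; change (\val i) with (nat_of_ord i); case: eqP => [E|hne]; first by rewrite E; case: ifP => //; rewrite ltnSn.
by have -> : (i < p.+1) = (i < p) by apply/idP/idP; lia.
Qed.


Lemma tapeW0 p : tapeW p 0 = oldt p.
Proof. by rewrite /tapeW take0 drop0. Qed.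

Lemma step_repr' c s tp hd s' wr mv : Repr c s tp hd -> val s.1.1.1 < 2 ->
  next s (view w (bin_val (somes_prefix tp))) (nth None tp hd) = (s', wr, mv) ->
  Repr (rstep w c) s' (set_nth None tp hd wr) (move_head mv hd).
Proof. by move=> R h E; move: (step_repr R h); rewrite E. Qed.

Lemma ph_lt (ph p j : nat) H : ph < 2 -> val (mkS ph p j H).1.1.1 < 2.
Proof. by move=> h; rewrite /= inordK //; apply: ltn_trans h _. Qed.

Lemma read_step c p : p < 25 -> Repr c (mkS 0 p 0 (hp p)) (oldt p) 0 ->
  Repr (rstep w c) (mkS 0 p 1 (hp p.+1)) (tapeW p 1) 1.
Proof.
move=> hp' R; rewrite -tapeW_step // tapeW0.
eapply (step_repr' (mv:=MRight) R); first by rewrite /= inordK.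
rewrite read_val; last by lia.
rewrite /next /mkS /= !inordK //; try lia.
have -> : (p == 25) = false by lia.
by rewrite /= hpS.
Qed.

Lemma write_step c p j H : p < 25 -> 0 < j < 4 -> Repr c (mkS 0 p j H) (tapeW p j) j ->
  Repr (rstep w c) (mkS 0 p j.+1 H) (tapeW p j.+1) j.+1.
Proof.
move=> hp' hj R; rewrite -tapeW_step; last by lia.
eapply (step_repr' (mv:=MRight) R); first by rewrite /= inordK.
rewrite /next /mkS /= !inordK //; try lia.
have -> : (j == 0) = false by lia.
by have -> : (j == 4) = false by lia.
Qed.

Lemma write_last c p H : p < 25 -> Repr c (mkS 0 p 4 H) (tapeW p 4) 4 ->
  Repr (rstep w c) (mkS 1 p 4 H) (fbt p.+1) 4.
Proof.
move=> hp' R; rewrite -tapeW5 -tapeW_step //.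
eapply (step_repr' (mv:=MStay) R); first by rewrite /= inordK.
by rewrite /next /mkS /= !inordK //; lia.
Qed.

Lemma ret_step c p j H : p < 25 -> 1 < j < 5 -> Repr c (mkS 1 p j H) (fbt p.+1) j ->
  Repr (rstep w c) (mkS 1 p j.-1 H) (fbt p.+1) j.-1.
Proof.
move=> hp' hj R; rewrite -(set_nth_same (s:=fbt p.+1) (j:=j)); last by rewrite size_fbt; lia.
rewrite -[X in Repr _ _ _ X]/(move_head MLeft j).
eapply (step_repr' R); first by rewrite /= inordK.
rewrite /next /mkS /= !inordK //; try lia.
by have -> : (j == 1) = false by lia.
Qed.

Lemma ret_last c p H : p < 25 -> Repr c (mkS 1 p 1 H) (fbt p.+1) 1 ->
  Repr (rstep w c) (mkS 0 p.+1 0 H) (oldt p.+1) 0.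
Proof.
move=> hp' R; have -> : oldt p.+1 = set_nth None (fbt p.+1) 1 (nth None (fbt p.+1) 1).
  by rewrite set_nth_same ?size_fbt.
rewrite -[X in Repr _ _ _ X]/(move_head MLeft 1).
eapply (step_repr' R); first by rewrite /= inordK.
by rewrite /next /mkS /= !inordK //; lia.
Qed.

Lemma final_step c : Repr c (mkS 0 25 0 (hp 25)) (oldt 25) 0 ->
  cstate (rstep w c) = enum_rank (if decide [seq view w i | i <- iota 0 KK] then ACC else REJ).
Proof.
move=> R.
have hph : \val (mkS 0 25 0 (hp 25)).1.1.1 < 2 by rewrite /= inordK.
have := step_repr R hph; rewrite read_val //.
rewrite /next /mkS /= !inordK //= hpS.
have -> : [seq hp 26 i | i <- enum 'I_KK] = [seq view w i | i <- iota 0 KK].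
  rewrite -val_enum_ord -map_comp; apply: eq_map => i; rewrite /= ffunE ltn_ord //.
by case=> ->.
Qed.

Lemma cycle c p : p < 25 -> Repr c (mkS 0 p 0 (hp p)) (oldt p) 0 ->
  Repr (iter 9 (rstep w) c) (mkS 0 p.+1 0 (hp p.+1)) (oldt p.+1) 0.
Proof.
move=> hp' R.
have R1 := read_step hp' R.
have R2 := write_step (j:=1) hp' isT R1.
have R3 := write_step (j:=2) hp' isT R2.
have R4 := write_step (j:=3) hp' isT R3.
have R5 := write_last hp' R4.
have R6 := ret_step (j:=4) hp' isT R5.
have R7 := ret_step (j:=3) hp' isT R6.
have R8 := ret_step (j:=2) hp' isT R7.
exact: ret_last hp' R8.
Qed.

Lemma run_p p : p <= 25 ->
  Repr (iter (9 * p) (rstep w) (rinit M)) (mkS 0 p 0 (hp p)) (oldt p) 0.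
Proof.
elim: p => [|p IH] hp'.
  rewrite /Repr /=; split; last by [].
  congr enum_rank; congr (_, _); apply/ffunP => i; rewrite !ffunE //.
rewrite mulnS iterD; apply: cycle; first by [].
by apply: IH; apply: ltnW.
Qed.

Lemma iter_halt (c : rconf M) k : rhalted c -> iter k (rstep w) c = c.
Proof. by move=> h; elim: k => //= k ->; rewrite /rstep h. Qed.

Lemma run_final k :
  let c := rrun M w (226 * k.+1) in
  rhalted c /\ cstate c = enum_rank (if decide [seq view w i | i <- iota 0 KK] then ACC else REJ).
Proof.
have R := run_p (p:=25) isT.
rewrite (_ : 9 * 25 = 225) // in R.
have E := final_step R.
have H : rhalted (rstep w (iter 225 (rstep w) (rinit M))).
  rewrite /rhalted E; case: decide; rewrite eqxx ?orbT //.
have H' : rhalted (iter 226 (rstep w) (rinit M)) by rewrite iterS.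
rewrite /rrun mulnS addnC iterD (iter_halt _ H').
by split; [exact: H' | rewrite iterS].
Qed.
End Run.

Arguments enc_circuit : simpl never.

Definition Lang (w : seq bool) : Prop := (1 < size w) && (nth false w 0 || nth false w 1).
Definition Cn n := Cb (1 < n).
Definition Dn n := Dc (1 < n).

Lemma mc_output_Dc bg w : mc_output (Dc bg) w = enc_circuit (Cb bg).
Proof.
rewrite /mc_output /Dc; move: (enc_circuit (Cb bg)) => s /=.
by elim: s => //= b s ->; case: b.
Qed.

Lemma ACC_REJ : enum_rank REJ = enum_rank ACC -> False.
Proof.
move/enum_rank_inj => E.
have := f_equal (fun s : T => nat_of_ord s.1.1.1) E.
by rewrite /= !inordK.
Qed.

Lemma dlog_Dn : dlogtime_uniform Dn.
Proof.
exists M, 226 => tag a b y /=.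
have [h1 h2] := run_final (dc_word tag a b y) (trunc_log 2 (size (dc_word tag a b y))).
split => //; rewrite h2 decide_ok /Dn.
case: (dc_holds _ _ _ _); split => // /ACC_REJ [].
Qed.

Lemma FAC0_f : FAC0 (fun w => mc_output (Dn (size w)) w).
Proof.
exists Dn, 34, 0; split; [|split; [|split; [|split; [|split; [|split]]]]].
- move=> n g; rewrite /Dn /= => hg; split => //.
  by case: g hg => [|[|]].
- move=> n; rewrite /Dn /=; exact: leq_trans (leq_addl _ _).
- move=> n; rewrite /Dn /= size_map; apply: leq_trans (size_encb _) (leq_addl _ _).
- move=> n; apply/allP => p /mapP [b _ ->] /=; by case: b.
- by move=> n [|[|]].
- exact: dlog_Dn.
- by [].
Qed.

Lemma wf_C2 n : 1 < n -> wf_circuit n C2.1 /\ C2.2 < csize C2.1 /\ is_or_circuit C2.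
Proof.
move=> hn; split; [|split => //; by split => // -[|[|[|]]]].
move=> [|[|[|g]]] //= _; rewrite /wf_gate /=; split => //.
all: try by split => //; lia.
all: by move=> [|[|p]].
Qed.

Lemma wf_C0 n : wf_circuit n C0.1 /\ C0.2 < csize C0.1 /\ is_or_circuit C0.
Proof.
split; [|split => //; by split => // -[|[|]]].
move=> [|[|g]] //= _; rewrite /wf_gate /=; split => //.
all: by move=> [|p].
Qed.

Lemma wf_Cn n : wf_circuit n (Cn n).1 /\ (Cn n).2 < csize (Cn n).1 /\ is_or_circuit (Cn n).
Proof.
rewrite /Cn /Cb; case: ifP => hn; [exact: wf_C2 | exact: wf_C0].
Qed.

Lemma Lang_or : uniform_FAC0_Or Lang.
Proof.
exists Cn; split; [exact: wf_Cn|split].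
  move=> w; rewrite /Lang /Cn /Cb /gate_val; case: ifP => hn /=.
    by rewrite orbF.
  by split.
exists (fun w => mc_output (Dn (size w)) w); split; first exact: FAC0_f.
by move=> n; rewrite mc_output_Dc size_nseq.
Qed.

Lemma and_mult (C : circuit) :
  (forall g, g < csize C -> wf_gate 2 C g /\
     match ctype C g with GInput _ | GConst _ | GAnd => True | _ => False end) ->
  forall f g, g < csize C ->
  gval C [:: false; false] f g = gval C [:: true; false] f g && gval C [:: false; true] f g.
Proof.
move=> HC; elim=> [|f IH] g hg //=.
have [[hp hw] ht] := HC g hg.
move: hw ht; case: (ctype C g) => //.
- move=> _ _; rewrite -all_predI; apply: eq_in_all => p hp'.
  by rewrite /= IH // (ltn_trans (hp p hp')).
- by move=> b _ _; rewrite andbb.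
- by move=> [|[|i]] [hi _] _.
Qed.

Lemma not_and : ~ uniform_FAC0_And Lang.
Proof.
case=> C [HC [HL _]].
have [wf [lt [hand hout]]] := HC 2.
have HC' : forall g, g < csize (C 2).1 -> wf_gate 2 (C 2).1 g /\
     match ctype (C 2).1 g with GInput _ | GConst _ | GAnd => True | _ => False end.
  by move=> g hg; split; [exact: wf | exact: hand].
have := and_mult HC' (C 2).2.+1 lt.
have := HL [:: true; false]; have := HL [:: false; true]; have := HL [:: false; false].
rewrite /gate_val /Lang /= => [[h00 _] [_ h01] [_ h10]].
rewrite (h01 isT) (h10 isT) => /h00.
by [].
Qed.

Theorem lemma4 :
  ~ (forall L : seq bool -> Prop, uniform_FAC0_Or L <-> uniform_FAC0_And L).
Proof. by move=> H; apply: not_and; apply/H; exact: Lang_or. Qed.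

Print Assumptions lemma4.
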